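(* Let $q$ be a prime power, and let $\pi,\sigma\in P$ with $\pi(x)=a+\frac{r}{x-i}$ and $\sigma(x)=b+\frac{s}{x-j}$ (i.e. $\pi=f_{a,r,i}$, $\sigma=f_{b,s,j}$ with $r,s\neq 0$). Then $hd(\pi^{\triangle},\sigma^{\triangle})=hd(\pi,\sigma)-3$ if and only if $r=s$ and $(b-a)(j-i)=r$.
   Context: For $K,i\in GF(q)$ and $r\in GF(q)\setminus\{0\}$, $f_{K,r,i}:GF(q)\cup\{\infty\}\to GF(q)\cup\{\infty\}$ is the permutation given by $f_{K,r,i}(x)=K+\frac{r}{x-i}$ for $x\notin\{i,\infty\}$, $f_{K,r,i}(\infty)=K$, $f_{K,r,i}(i)=\infty$; $P$ is the set of all such $f_{K,r,i}$. For permutations $\pi,\sigma$ of a finite set, $hd(\pi,\sigma)$ is the number of points at which they differ. The distinguished element is $F=\infty$: for a permutation $\pi$ of $GF(q)\cup\{\infty\}$, $\pi^{\triangle}$ is the permutation with $\pi^{\triangle}(\pi^{-1}(\infty))=\pi(\infty)$, $\pi^{\triangle}(\infty)=\infty$, and $\pi^{\triangle}(x)=\pi(x)$ otherwise. *)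

(* Defs.v *)
(* GF(q) is modelled by an arbitrary finite field F
   (finite fields are exactly the GF(q), q a prime power);
   GF(q) ∪ {∞} is modelled by [option F], with [None] = ∞. *)
From HB Require Import structures.
From mathcomp Require Import all_boot all_order all_algebra all_field.
Set Implicit Arguments. Unset Strict Implicit. Unset Printing Implicit Defensive.
Import GRing.Theory.
Local Open Scope ring_scope.

Definition fKri (F : finFieldType) (K r i : F) (x : option F) : option F :=
  match x with
  | None => Some K
  | Some y => if y == i then None else Some (K + r / (y - i))
  end.

Definition hd (T : finType) (p s : T -> T) : nat :=
  #|[pred x | p x != s x]|.

(* pi^triangle with distinguished element F = ∞ (None):
   pi^△(∞) = ∞, pi^△(pi^{-1}(∞)) = pi(∞), pi^△(x) = pi(x) otherwise. *)
Definition tri (F : finFieldType) (p : option F -> option F) (x : option F)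
  : option F :=
  match x with
  | None => None
  | Some _ => if p x == None then p None else p x
  end.

(* Main.v *)
From HB Require Import structures.
From mathcomp Require Import all_boot all_order all_algebra all_field.
From mathcomp Require Import ring zify.
Require Import Defs.
Import GRing.Theory.
Local Open Scope ring_scope.
Lemma sum_opt (T : finType) (f : option T -> nat) :
  \sum_(x : option T) f x = (f None + \sum_(y : T) f (Some y))%N.
Proof.
rewrite (bigD1 None) //=; congr (_ + _)%N.
rewrite (reindex_omap Some id) /=; last by case.
by apply: eq_bigl => y; rewrite eqxx.
Qed.
Lemma hdE (T : finType) (p s : T -> T) : hd p s = \sum_x (p x != s x : nat).
Proof.
rewrite /hd -sum1_card big_mkcond; apply: eq_bigr => x _.
by rewrite inE; case: (_ != _).
Qed.

Theorem lemma10 (F : finFieldType) (a r i b s j : F) :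
  r != 0 -> s != 0 ->
  ((hd (tri (fKri a r i)) (tri (fKri b s j)) + 3)%N
     = hd (fKri a r i) (fKri b s j)
   <-> r = s /\ (b - a) * (j - i) = r).
Proof.
move=> r0 s0; rewrite !hdE !sum_opt.
have [<-|ij] := eqVneq j i.
  rewrite (bigD1 j) // [in RHS](bigD1 j) //=.
  rewrite eqxx /=.
  set S1 := (\sum_(y | _) _)%N; set S2 := (\sum_(y | _) _)%N.
  have -> : S1 = S2.
    by apply: eq_bigr => y yj; rewrite (negbTE yj).
  split => [H|[_ H]]; first lia.
  by rewrite subrr mulr0 in H; rewrite -H eqxx in r0.
rewrite (bigD1 i) // [in RHS](bigD1 i) //= (bigD1 j) ?ij // [in RHS](bigD1 j) ?ij //=.
have dj : j - i != 0 by rewrite subr_eq0.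
have di : i - j != 0 by rewrite subr_eq0 eq_sym.
have A : (Some a != Some (b + s / (i - j))) = ((b - a) * (j - i) != s).
  rewrite (inj_eq (@Some_inj _)); congr negb; apply/eqP/eqP => H.
    by rewrite H; field; rewrite di.
  rewrite -H; field; by rewrite di.
have B : (Some (a + r / (j - i)) != Some b) = ((b - a) * (j - i) != r).
  rewrite (inj_eq (@Some_inj _)); congr negb; apply/eqP/eqP => H.
    by rewrite -H; field; rewrite dj.
  rewrite -H; field; by rewrite dj.
rewrite eqxx ?(negbTE ij) ?(eq_sym i j) ?(negbTE ij) /= eqxx /=.
set S1 := (\sum_(y | _) _)%N; set S2 := (\sum_(y | _) _)%N.
have -> : S1 = S2.
  by apply: eq_bigr => y /andP[yi yj]; rewrite (negbTE yi) (negbTE yj).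
rewrite A B (inj_eq (@Some_inj _)).
split.
  case: eqP => Hs; case: eqP => Hr; case: eqP => Hab //= H; try lia.
  by rewrite -Hs -Hr.
move=> [<- H]; rewrite H eqxx /=.
have -> : (a == b) = false.
  by apply/negbTE/eqP => Hab; move: r0; rewrite -H Hab subrr mul0r eqxx.
by rewrite /=; lia.
Qed.
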